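(* Let $A$ be a $*$-ring with a set of local $*$-units. Then $A$ is von Neumann regular and a locally Rickart $*$-ring if and only if $A$ is von Neumann regular and proper. Likewise, if $A$ is a $\Gamma$-graded $*$-ring with a set of graded local $*$-units, then $A$ is graded von Neumann regular and a graded locally Rickart $*$-ring if and only if $A$ is graded von Neumann regular and graded proper.
   Context: Projection: $p=p^2=p^*$. Local $*$-units: for every finite $F\subseteq A$ a projection $u$ with $ux=xu=x$ for $x\in F$ (homogeneous $u$ in the graded case, where $A=\bigoplus_\gamma A_\gamma$ is $\Gamma$-graded with $A_\gamma^*\subseteq A_{-\gamma}$). Von Neumann regular: for each $x$ there is $y$ with $xyx=x$; graded von Neumann regular: for each homogeneous $x$ there is homogeneous $y$ with $xyx=x$. Rickart $*$-ring: right annihilator of every element generated by a projection; graded Rickart $*$-ring: right annihilator of every homogeneous element generated by a homogeneous projection. Locally (graded) Rickart $*$-ring: $pAp$ is a (graded) Rickart $*$-ring for every (homogeneous) projection $p$. Proper: $xx^*=0\Rightarrow x=0$; graded proper: the same for homogeneous $x$. *)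

(* Defs.v *)
From HB Require Import structures.
From mathcomp Require Import all_boot all_order all_algebra.
Set Implicit Arguments. Unset Strict Implicit. Unset Printing Implicit Defensive.
Import GRing.Theory.
Local Open Scope ring_scope.

Record starRing := StarRing {
  sr_sort :> zmodType;
  sr_mul : sr_sort -> sr_sort -> sr_sort;
  sr_star : sr_sort -> sr_sort;
  sr_mulA : associative sr_mul;
  sr_mulDl : forall x y z, sr_mul (x + y) z = sr_mul x z + sr_mul y z;
  sr_mulDr : forall x y z, sr_mul x (y + z) = sr_mul x y + sr_mul x z;
  sr_starD : forall x y, sr_star (x + y) = sr_star x + sr_star y;
  sr_starK : forall x, sr_star (sr_star x) = x;
  sr_starM : forall x y, sr_star (sr_mul x y) = sr_mul (sr_star y) (sr_star x)
}.

Section Defs.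
Variable A : starRing.
Local Notation "x ** y" := (sr_mul x y) (at level 40, left associativity).
Local Notation "x ^#" := (sr_star x) (at level 2).

Definition is_projection (p : A) : Prop := p ** p = p /\ p ^# = p.

Definition in_corner (p x : A) : Prop := exists a : A, x = p ** a ** p.

Definition has_local_star_units : Prop :=
  forall F : seq A, exists u : A, is_projection u /\
    forall x, x \in F -> u ** x = x /\ x ** u = x.

Definition von_neumann_regular : Prop :=
  forall x : A, exists y : A, x ** y ** x = x.

Definition star_proper : Prop := forall x : A, x ** x ^# = 0 -> x = 0.

(* pAp is a Rickart *-ring (pAp is unital with unit p): the right annihilator
   in pAp of every x in pAp equals q(pAp) for some projection q of pAp. *)
Definition corner_rickart (p : A) : Prop :=
  forall x : A, in_corner p x ->
    exists q : A, is_projection q /\ in_corner p q /\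
      forall y : A, (in_corner p y /\ x ** y = 0) <->
                    (exists z : A, in_corner p z /\ y = q ** z).

Definition locally_rickart : Prop :=
  forall p : A, is_projection p -> corner_rickart p.

(* Gamma-gradings: A = (+)_g H g as an internal direct sum of additive
   subgroups, with H g * H d <= H (g + d) and (H g)^* <= H (- g). *)
Definition is_grading (G : zmodType) (H : G -> A -> Prop) : Prop :=
  (forall g, H g 0) /\
      (forall g x y, H g x -> H g y -> H g (x - y)) /\
      (forall x : A, exists (s : seq G) (f : G -> A),
          uniq s /\ (forall g, H g (f g)) /\ x = \sum_(g <- s) f g) /\
      (forall (s : seq G) (f : G -> A), uniq s -> (forall g, H g (f g)) ->
          \sum_(g <- s) f g = 0 -> forall g, g \in s -> f g = 0) /\
      (forall g d x y, H g x -> H d y -> H (g + d) (x ** y)) /\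
      (forall g x, H g x -> H (- g) (x ^#)).

Definition homogeneous (G : zmodType) (H : G -> A -> Prop) (x : A) : Prop :=
  exists g, H g x.

Definition has_graded_local_star_units (G : zmodType) (H : G -> A -> Prop)
  : Prop :=
  forall F : seq A, exists u : A, homogeneous H u /\ is_projection u /\
    forall x, x \in F -> u ** x = x /\ x ** u = x.

Definition graded_von_neumann_regular (G : zmodType) (H : G -> A -> Prop)
  : Prop :=
  forall x : A, homogeneous H x ->
    exists y : A, homogeneous H y /\ x ** y ** x = x.

Definition graded_proper (G : zmodType) (H : G -> A -> Prop) : Prop :=
  forall x : A, homogeneous H x -> x ** x ^# = 0 -> x = 0.

(* pAp (graded by p A_g p) is a graded Rickart *-ring: the right annihilator
   in pAp of every homogeneous x in pAp equals q(pAp) for a homogeneous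
   projection q of pAp. *)
Definition corner_graded_rickart (G : zmodType) (H : G -> A -> Prop) (p : A)
  : Prop :=
  forall x : A, in_corner p x -> homogeneous H x ->
    exists q : A, is_projection q /\ in_corner p q /\ homogeneous H q /\
      forall y : A, (in_corner p y /\ x ** y = 0) <->
                    (exists z : A, in_corner p z /\ y = q ** z).

Definition graded_locally_rickart (G : zmodType) (H : G -> A -> Prop) : Prop :=
  forall p : A, is_projection p -> homogeneous H p -> corner_graded_rickart H p.

End Defs.

(* Main.v *)
Require Import Defs.
From mathcomp Require Import all_boot all_order all_algebra.
Set Implicit Arguments. Unset Strict Implicit. Unset Printing Implicit Defensive.
Import GRing.Theory.
Local Open Scope ring_scope.

Section S.
Variable A : starRing.
Local Notation "x ** y" := (sr_mul x y) (at level 40, left associativity).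
Local Notation "x ^#" := (sr_star x) (at level 2).

Lemma mul0m (x : A) : 0 ** x = 0.
Proof.
have: 0 ** x + 0 ** x = 0 ** x + 0 by rewrite -sr_mulDl !addr0.
by move/addrI.
Qed.
Lemma mulm0 (x : A) : x ** 0 = 0.
Proof.
have: x ** 0 + x ** 0 = x ** 0 + 0 by rewrite -sr_mulDr !addr0.
by move/addrI.
Qed.
Lemma mulNm (x y : A) : (- x) ** y = - (x ** y).
Proof. by apply/eqP; rewrite -addr_eq0 -sr_mulDl addNr mul0m. Qed.
Lemma mulmN (x y : A) : x ** (- y) = - (x ** y).
Proof. by apply/eqP; rewrite -addr_eq0 -sr_mulDr addNr mulm0. Qed.
Lemma mulBm (x y z : A) : (x - y) ** z = x ** z - y ** z.
Proof. by rewrite sr_mulDl mulNm. Qed.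
Lemma mulmB (x y z : A) : z ** (x - y) = z ** x - z ** y.
Proof. by rewrite sr_mulDr mulmN. Qed.
Lemma star0 : (0 : A)^# = 0.
Proof.
have: (0:A)^# + 0^# = 0^# + 0 by rewrite -sr_starD !addr0.
by move/addrI.
Qed.
Lemma starN (x : A) : (- x)^# = - x^#.
Proof. by apply/eqP; rewrite -addr_eq0 -sr_starD addNr star0. Qed.
Lemma starB (x y : A) : (x - y)^# = x^# - y^#.
Proof. by rewrite sr_starD starN. Qed.

Lemma corner_eq (p y : A) : is_projection p -> in_corner p y ->
  p ** y = y /\ y ** p = y.
Proof.
move=> [Hpp _] [a ->]; split; first by rewrite !sr_mulA Hpp.
by rewrite -!sr_mulA Hpp.
Qed.

Lemma fwd_core (p x q : A) : is_projection p -> in_corner p x ->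
  is_projection q -> in_corner p q ->
  (forall y, (in_corner p y /\ x ** y = 0) <->
             exists z, in_corner p z /\ y = q ** z) ->
  x ** x^# = 0 -> x = 0.
Proof.
move=> Hp Hxc [Hqq Hqs] Hqc Hiff Hxx.
have Hxs : in_corner p x^#.
  case: Hxc => a ->; exists a^#; rewrite !sr_starM (proj2 Hp) !sr_mulA //.
have [z [_ Ez]] : exists z, in_corner p z /\ x^# = q ** z.
  by apply/Hiff; split.
have xq : x ** q = 0.
  suff [_ ->] : in_corner p q /\ x ** q = 0 by [].
  apply/Hiff; exists p; split; first by exists p; rewrite !(proj1 Hp).
  by rewrite (proj2 (corner_eq Hp Hqc)).
have ex : x = z^# ** q by rewrite -[x]sr_starK Ez sr_starM Hqs.
by rewrite ex -Hqq sr_mulA -ex xq.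
Qed.

Lemma Hq_lemma (p x v : A) : is_projection p -> in_corner p x ->
  x ** x^# ** v ** x ** x^# = x ** x^# ->
  (((p - v ** x ** x^#)^# ** x) ** ((p - v ** x ** x^#)^# ** x)^# = 0 ->
    (p - v ** x ** x^#)^# ** x = 0) ->
  x^# ** v ** x ** x^# = x^#.
Proof.
move=> Hp Hxc Hv Hpr.
set w := p - v ** x ** x^#.
have [px xp] := corner_eq Hp Hxc.
have xsp : x^# ** p = x^# by rewrite -[in RHS]px sr_starM (proj2 Hp).
have W : x ** x^# ** w = 0.
  rewrite /w mulmB -sr_mulA xsp -!sr_mulA.
  move: Hv; rewrite -!sr_mulA => ->; by rewrite subrr.
have : (w^# ** x) = 0.
  apply: Hpr; rewrite -/w sr_starM sr_starK -!sr_mulA.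
  by rewrite [x ** (x^# ** w)]sr_mulA W !mulm0.
move=> /(congr1 (@sr_star A)); rewrite sr_starM sr_starK star0 /w mulmB xsp.
by move/eqP; rewrite subr_eq0 => /eqP E; rewrite [in RHS]E !sr_mulA.
Qed.

Lemma bwd_core (p x v : A) : is_projection p -> in_corner p x ->
  x^# ** v ** x ** x^# = x^# ->
  is_projection (x^# ** v ** x) /\
  is_projection (p - x^# ** v ** x) /\ in_corner p (p - x^# ** v ** x) /\
  forall y, (in_corner p y /\ x ** y = 0) <->
     (exists z, in_corner p z /\ y = (p - x^# ** v ** x) ** z).
Proof.
move=> Hp Hxc Hq.
have [px xp] := corner_eq Hp Hxc.
have [Hpp Hps] := Hp.
have pxs : p ** x^# = x^# by rewrite -[in RHS]xp sr_starM Hps.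
set q := x^# ** v ** x.
have qq : q ** q = q by rewrite /q !sr_mulA Hq.
have qqs : q ** q^# = q^#.
  by rewrite /q !sr_starM sr_starK !sr_mulA Hq.
have qs : q^# = q by rewrite -[q in RHS]sr_starK -qqs sr_starM sr_starK qqs.
have xq : x ** q = x.
  have := congr1 (@sr_star A) Hq; rewrite sr_starM sr_starK.
  by rewrite -/q -[q^#]/(q^#) qs.
have pq : p ** q = q by rewrite /q !sr_mulA pxs.
have qp : q ** p = q by rewrite /q -!sr_mulA xp.
have Pr : is_projection (p - q).
  split; last by rewrite starB Hps qs.
  by rewrite !mulBm !mulmB Hpp pq qp qq subrr subr0.
have rp : (p - q) ** p = p - q by rewrite mulBm Hpp qp.
have pr : p ** (p - q) = p - q by rewrite mulmB Hpp pq.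
have xr : x ** (p - q) = 0 by rewrite mulmB xp xq subrr.
split; first by split.
split; first done.
split; first by exists (p - q); rewrite pr rp.
move=> y; split.
  move=> [Hyc Hxy]; exists y; split => //.
  rewrite mulBm (proj1 (corner_eq Hp Hyc)) /q -sr_mulA Hxy mulm0 subr0 //.
move=> [z [Hzc ->]]; split.
  exists ((p - q) ** z); rewrite sr_mulA pr -sr_mulA (proj2 (corner_eq Hp Hzc)) //.
by rewrite sr_mulA xr mul0m.
Qed.

Section Graded.
Variables (G : zmodType) (H : G -> A -> Prop).
Hypothesis Hg : is_grading H.

Lemma proj_deg0 (q : A) : is_projection q -> homogeneous H q -> H 0 q.
Proof.
move=> [Hqq Hqs] [g Hq].
case: Hg => _ [_ [_ [_ [Hmul Hst]]]].
have := Hmul _ _ _ _ Hq (Hst _ _ Hq).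
by rewrite Hqs Hqq subrr.
Qed.

Lemma hom_unique g h (y : A) : H g y -> H h y -> g != h -> y = 0.
Proof.
move=> Hy1 Hy2 ne.
case: Hg => H0 [HB [_ [Hind _]]].
pose f k := if k == g then y else if k == h then 0 - y else 0.
have := Hind [:: g; h] f.
rewrite /= inE ne /= => /(_ isT).
have Hf : forall k, H k (f k).
  move=> k; rewrite /f; case: eqP => [->|_] //; case: eqP => [->|_] //.
  exact: HB.
move=> /(_ Hf); rewrite !big_cons big_nil /f eqxx eq_sym (negbTE ne) eqxx.
rewrite add0r addr0 addrN => /(_ erefl g); rewrite inE eqxx => /(_ isT).
by [].
Qed.

End Graded.

End S.

Theorem mainTheorem9 :
  (forall A : starRing, has_local_star_units A ->
     (von_neumann_regular A /\ locally_rickart A <->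
      von_neumann_regular A /\ star_proper A)) /\
  (forall (A : starRing) (G : zmodType) (H : G -> A -> Prop),
     is_grading H -> has_graded_local_star_units H ->
     (graded_von_neumann_regular H /\ graded_locally_rickart H <->
      graded_von_neumann_regular H /\ graded_proper H)).
Proof.
split.
  move=> A Hu; split.
    move=> [Hr Hlr]; split => // x Hxx.
    have [u [Hup HuF]] := Hu [:: x].
    have [h1 h2] := HuF x (mem_head _ _).
    have Hxc : in_corner u x by exists x; rewrite h1 h2.
    have [q [Hq [Hqc Hiff]]] := Hlr u Hup x Hxc.
    exact: (fwd_core Hup Hxc Hq Hqc Hiff).
  move=> [Hr Hp]; split => // p Hpp x Hxc.
  have [v Hv] := Hr (sr_mul x (sr_star x)).
  rewrite !sr_mulA in Hv.
  have Hq := Hq_lemma Hpp Hxc Hv (Hp _).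
  have [_ [Pr [Prc Hiff]]] := bwd_core Hpp Hxc Hq.
  by exists (p - sr_mul (sr_mul (sr_star x) v) x).
move=> A G H Hg Hu.
have Hg' := Hg.
case: Hg' => H0 [HB [_ [_ [Hmul Hst]]]].
split.
  move=> [Hr Hlr]; split => // x Hxh Hxx.
  have [u [Huh [Hup HuF]]] := Hu [:: x].
  have [h1 h2] := HuF x (mem_head _ _).
  have Hxc : in_corner u x by exists x; rewrite h1 h2.
  have [q [Hq [Hqc [_ Hiff]]]] := Hlr u Hup Huh x Hxc Hxh.
  exact: (fwd_core Hup Hxc Hq Hqc Hiff).
move=> [Hr Hp]; split => // p Hpp Hph x Hxc [g Hxg].
have Hxs := Hst _ _ Hxg.
have Hxx := Hmul _ _ _ _ Hxg Hxs.
have [v [[d Hvd] Hv]] := Hr (sr_mul x (sr_star x)) (ex_intro _ _ Hxx).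
rewrite !sr_mulA in Hv.
have Hp0 := proj_deg0 Hg Hpp Hph.
have Hq : sr_mul (sr_mul (sr_mul (sr_star x) v) x) (sr_star x) = sr_star x.
  case: (eqVneq d 0) => [Ed | Nd].
    apply: (Hq_lemma Hpp Hxc Hv); apply: Hp.
    subst d.
    have Hw1 := Hmul _ _ _ _ (Hmul _ _ _ _ Hvd Hxg) Hxs.
    rewrite add0r subrr in Hw1.
    have Hw := Hst _ _ (HB _ _ _ Hp0 Hw1).
    by exists (- 0 + g); apply: Hmul.
  have Hdeg := Hmul _ _ _ _ (Hmul _ _ _ _ (Hmul _ _ _ _ Hxx Hvd) Hxg) Hxs.
  rewrite Hv subrr add0r addrK in Hdeg.
  rewrite subrr in Hxx.
  have X0 : sr_mul x (sr_star x) = 0 by apply: (hom_unique Hg Hdeg Hxx).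
  have -> : x = 0 by apply: Hp => //; exists g.
  by rewrite star0 ?mulm0 ?mul0m.
have [Qp [Pr [Prc Hiff]]] := bwd_core Hpp Hxc Hq.
exists (p - sr_mul (sr_mul (sr_star x) v) x); split => //; split => //; split => //.
exists 0; apply: HB => //; apply: (proj_deg0 Hg Qp).
exists (- g + d + g); apply: (Hmul) => //; exact: (Hmul).
Qed.
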